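(* Consider a one-site PTM cascade with $n\ge1$ layers and positive total amounts. With $r=r_1/r_2$ as defined in the context, the BMSS value of $S_n^1$ is the smallest positive real root of the polynomial $P(s)=r_2(s)\,\overline{E}-r_1(s)$.
   Context: A one-site PTM cascade with $n$ layers has species $E=S_0^1$ and, for $i=1,\dots,n$, $S_i^0,S_i^1,F_i,Y_i^0,Y_i^1$, with reactions $S_{i-1}^1+S_i^0 \rightleftharpoons Y_i^0 \to S_{i-1}^1+S_i^1$ (rate constants $a_i^0,b_i^0,c_i^0$) and $F_i+S_i^1\rightleftharpoons Y_i^1\to F_i+S_i^0$ (rate constants $a_i^1,b_i^1,c_i^1$), all positive, mass-action kinetics. Put $\delta_i=a_i^1/(b_i^1+c_i^1)$, $\gamma_i=(c_i^1/c_i^0)\delta_i$, $\lambda_i=\frac{b_i^0+c_i^0}{a_i^0}\gamma_i$. Given total amounts $\overline{E},\overline{F}_i,\overline{S}_i$, a steady state is a real solution of: $Y_i^0=\gamma_iF_iS_i^1$, $Y_i^1=\delta_iF_iS_i^1$, $\lambda_iF_iS_i^1=S_i^0S_{i-1}^1$, $\overline{F}_i=F_i+Y_i^1$, $\overline{S}_i=S_i^0+S_i^1+Y_i^0+Y_i^1+Y_{i+1}^0$ ($i=1,\dots,n$, $Y_{n+1}^0:=0$), $\overline{E}=E+Y_1^0$. A BMSS is a steady state with positive total amounts and all concentrations nonnegative; it exists and is unique. Define $d_i(x,y)=(\overline{S}_i-y)-x-\overline{F}_i(\delta_i+\gamma_i)x+\delta_i(\overline{S}_i-y)x-\delta_ix^2$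 and $g_i^Y(x)=\frac{\gamma_i\overline{F}_ix}{1+\delta_ix}$; define rational functions of $s$ recursively by $f_n(s)=s$, $f_{n+1}^Y(s)=0$, and for $i=n,\dots,1$: $f_i^Y(s)=g_i^Y(f_i(s))$, $f_{i-1}(s)=\frac{\lambda_i\overline{F}_if_i(s)}{d_i(f_i(s),f_{i+1}^Y(s))}$. Let $r(s)=f_0(s)+f_1^Y(s)$ and write $r=r_1/r_2$ in reduced form with $r_1,r_2\in\mathbb{R}[s]$. *)

(* Defs.v *)
From HB Require Import structures.
From mathcomp Require Import all_boot all_order all_algebra.
From mathcomp Require Import fraction.
Set Implicit Arguments. Unset Strict Implicit. Unset Printing Implicit Defensive.
Import Order.TTheory GRing.Theory Num.Theory.
Local Open Scope ring_scope.

Notation "x %:F" := (@FracField.tofrac _ x).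

Section PTM.
Variable R : rcfType.
(* rate constants, indexed by layer i = 1..n (values at other indices unused) *)
Variables (a0 b0 c0 a1 b1 c1 : nat -> R).

Definition delta (i : nat) : R := a1 i / (b1 i + c1 i).
Definition gamma (i : nat) : R := (c1 i / c0 i) * delta i.
Definition lambda (i : nat) : R := (b0 i + c0 i) / a0 i * gamma i.

(* Steady-state system of the paper; E = S1 0 (= S_0^1), Y_{n+1}^0 := 0. *)
Definition steady_state (n : nat) (Ebar : R) (Fbar Sbar : nat -> R)
  (S0 S1 F Y0 Y1 : nat -> R) : Prop :=
  (forall i, (1 <= i <= n)%N ->
     [/\ Y0 i = gamma i * F i * S1 i,
         Y1 i = delta i * F i * S1 i,
         lambda i * F i * S1 i = S0 i * S1 i.-1,
         Fbar i = F i + Y1 i &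
         Sbar i = S0 i + S1 i + Y0 i + Y1 i + (if i == n then 0 else Y0 i.+1)])
  /\ Ebar = S1 0 + Y0 1.

(* BMSS: steady state with all concentrations nonnegative
   (positivity of the total amounts is assumed separately). *)
Definition BMSS (n : nat) (Ebar : R) (Fbar Sbar : nat -> R)
  (S0 S1 F Y0 Y1 : nat -> R) : Prop :=
  steady_state n Ebar Fbar Sbar S0 S1 F Y0 Y1 /\
  0 <= S1 0 /\
  (forall i, (1 <= i <= n)%N ->
     [/\ 0 <= S0 i, 0 <= S1 i, 0 <= F i, 0 <= Y0 i & 0 <= Y1 i]).

Local Notation RF := {fraction {poly R}}.
Definition cst (c : R) : RF := (c%:P)%:F.

Definition dfun (Fbar Sbar : nat -> R) (i : nat) (x y : RF) : RF :=
  (cst (Sbar i) - y) - x - cst (Fbar i * (delta i + gamma i)) * x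
  + cst (delta i) * (cst (Sbar i) - y) * x - cst (delta i) * x ^+ 2.

Definition gY (Fbar : nat -> R) (i : nat) (x : RF) : RF :=
  cst (gamma i * Fbar i) * x / (1 + cst (delta i) * x).

(* fpair n Fbar Sbar j = (f_{n-j}, f^Y_{n-j+1}) *)
Fixpoint fpair (n : nat) (Fbar Sbar : nat -> R) (j : nat) : RF * RF :=
  match j with
  | O => (('X : {poly R})%:F, 0)
  | j'.+1 =>
      let i := (n - j')%N in
      let x := (fpair n Fbar Sbar j').1 in
      let y := (fpair n Fbar Sbar j').2 in
      (cst (lambda i * Fbar i) * x / dfun Fbar Sbar i x y, gY Fbar i x)
  end.

Definition rfun (n : nat) (Fbar Sbar : nat -> R) : RF :=
  (fpair n Fbar Sbar n).1 + (fpair n Fbar Sbar n).2.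

End PTM.

(* Main.v *)
Require Import Defs.
From HB Require Import structures.
From mathcomp Require Import all_boot all_order all_algebra.
From mathcomp Require Import fraction.
From Stdlib Require Import Ring Field.
Import Order.TTheory GRing.Theory Num.Theory.
Set Implicit Arguments. Unset Strict Implicit. Unset Printing Implicit Defensive.
Local Open Scope ring_scope.

Definition addR (F : fieldType) (x y : F) : F := x + y.
Definition mulR (F : fieldType) (x y : F) : F := x * y.
Definition oppR (F : fieldType) (x : F) : F := - x.
Definition invR (F : fieldType) (x : F) : F := x^-1.
Definition subR (F : fieldType) (x y : F) : F := addR x (oppR y).
Definition divR (F : fieldType) (x y : F) : F := mulR x (invR y).
Definition zeroR (F : fieldType) : F := 0.
Definition oneR (F : fieldType) : F := 1.
Lemma FT (F : fieldType) : @field_theory F (zeroR F) (oneR F) (@addR F) (@mulR F)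
  (@subR F) (@oppR F) (@divR F) (@invR F) (@eq F).
Proof.
split=> //.
- rewrite /addR/mulR/subR/oppR/addR/zeroR/oneR.
  split=> *; rewrite ?add0r ?addrA ?mul1r ?mulrA ?mulrDl ?subrr //;
    try exact: addrC; try exact: mulrC.
- by apply/eqP; rewrite oner_eq0.
- move=> x /eqP hx; exact: mulVf.
Qed.
Lemma addRE (F : fieldType) (x y : F) : x + y = addR x y. Proof. by []. Qed.
Lemma mulRE (F : fieldType) (x y : F) : x * y = mulR x y. Proof. by []. Qed.
Lemma oppRE (F : fieldType) (x : F) : - x = oppR x. Proof. by []. Qed.
Lemma invRE (F : fieldType) (x : F) : x^-1 = invR x. Proof. by []. Qed.
Lemma zeroRE (F : fieldType) : 0 = zeroR F. Proof. by []. Qed.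
Lemma oneRE (F : fieldType) : 1 = oneR F. Proof. by []. Qed.

Section Main.
Variable R : rcfType.
Local Notation RF := {fraction {poly R}}.
Add Field FRR : (FT R).
Lemma addRRE (x y : R) : x + y = addR x y. Proof. by []. Qed.
Lemma mulRRE (x y : R) : x * y = mulR x y. Proof. by []. Qed.
Lemma oppRRE (x : R) : - x = oppR x. Proof. by []. Qed.
Lemma invRRE (x : R) : x^-1 = invR x. Proof. by []. Qed.
Lemma zeroRRE : 0 = zeroR R. Proof. by []. Qed.
Lemma oneRRE : 1 = oneR R. Proof. by []. Qed.
Ltac rnormR := apply: (@addIr R 0); rewrite ?expr2 ?addRRE ?mulRRE ?oppRRE ?invRRE ?zeroRRE ?oneRRE;
  match goal with |- @eq _ ?x ?y => change (@eq (GRing.Field.sort R) x y) end.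

Definition ev (q : RF) (s v : R) := exists u w : {poly R},
  [/\ w.[s] != 0, q * w%:F = u%:F & u.[s] = v * w.[s]].

Lemma horner1' (s : R) : (1 : {poly R}).[s] = 1.
Proof. by rewrite -polyC1 hornerC. Qed.

Lemma ev_poly p s : ev p%:F s p.[s].
Proof. exists p, 1; split; rewrite ?horner1' ?tofrac1 ?mulr1 //; exact: oner_neq0. Qed.

Lemma ev_cst c s : ev (cst c) s c.
Proof. by have := ev_poly c%:P s; rewrite hornerC. Qed.

Lemma ev_X s : ev ('X : {poly R})%:F s s.
Proof. by have := ev_poly 'X s; rewrite hornerX. Qed.

Lemma ev_0 s : ev 0 s 0.
Proof. by have := ev_cst 0 s; rewrite /cst tofrac0. Qed.

Lemma ev_1 s : ev 1 s 1.
Proof. by have := ev_cst 1 s; rewrite /cst polyC1 tofrac1. Qed.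

Lemma ev_add q1 q2 s v1 v2 : ev q1 s v1 -> ev q2 s v2 -> ev (q1 + q2) s (v1 + v2).
Proof.
move=> [u1 [w1 [h1 e1 f1]]] [u2 [w2 [h2 e2 f2]]].
exists (u1 * w2 + u2 * w1), (w1 * w2); split.
- by rewrite hornerM mulf_neq0.
- by rewrite tofracD !tofracM -e1 -e2 mulrDl !mulrA [X in _ = _ + X]mulrAC.
- rewrite hornerD !hornerM f1 f2; set A := w1.[s]; set B := w2.[s]; rnormR; ring.
Qed.

Lemma ev_mul q1 q2 s v1 v2 : ev q1 s v1 -> ev q2 s v2 -> ev (q1 * q2) s (v1 * v2).
Proof.
move=> [u1 [w1 [h1 e1 f1]]] [u2 [w2 [h2 e2 f2]]].
exists (u1 * u2), (w1 * w2); split.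
- by rewrite hornerM mulf_neq0.
- by rewrite !tofracM -e1 -e2 mulrACA.
- rewrite !hornerM f1 f2; set A := w1.[s]; set B := w2.[s]; rnormR; ring.
Qed.

Lemma ev_opp q s v : ev q s v -> ev (- q) s (- v).
Proof.
move=> [u [w [h e f]]]; exists (- u), w; split => //.
- by rewrite tofracN -e mulNr.
- by rewrite hornerN f mulNr.
Qed.

Lemma ev_inv q s v : v != 0 -> ev q s v -> ev q^-1 s v^-1.
Proof.
move=> hv [u [w [h e f]]].
have hu : u.[s] != 0 by rewrite f mulf_neq0.
have hu' : u%:F != 0.
  by rewrite tofrac_eq0; apply: contra hu => /eqP ->; rewrite horner0.
have hq : q != 0 by apply: contra hu' => /eqP q0; rewrite -e q0 mul0r.
exists w, u; split => //.
- by rewrite -e mulKf.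
- by rewrite f mulKf.
Qed.

Lemma ev_div q1 q2 s v1 v2 : v2 != 0 -> ev q1 s v1 -> ev q2 s v2 -> ev (q1 / q2) s (v1 / v2).
Proof. by move=> hv e1 e2; apply: ev_mul => //; apply: ev_inv. Qed.

Lemma ev_exp2 q s v : ev q s v -> ev (q ^+ 2) s (v ^+ 2).
Proof. by move=> e; rewrite !expr2; apply: ev_mul. Qed.


Definition dG (d g Fb Sb x y : R) := (Sb - y) - x - Fb * (d + g) * x
  + d * (Sb - y) * x - d * x ^+ 2.

Lemma pos1 (z : R) : 0 <= z -> 0 < 1 + z.
Proof. by move=> hz; apply: ltr_wpDr hz ltr01. Qed.

Lemma hmono (d a b : R) : 0 <= d -> 0 <= a -> a < b -> a / (1 + d * a) < b / (1 + d * b).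
Proof.
move=> hd ha hab.
have hb : 0 <= b by apply: ltW; apply: le_lt_trans hab.
have p1 := pos1 (mulr_ge0 hd ha); have p2 := pos1 (mulr_ge0 hd hb).
rewrite ltr_pdivrMr // mulrAC ltr_pdivlMr //.
have -> : a * (1 + d * b) = a + d * a * b by rnormR; ring.
have -> : b * (1 + d * a) = b + d * a * b by rnormR; ring.
by rewrite ltrD2r.
Qed.

Lemma layer_eq (d g l Fb Sb S0 x x' F Y0 Y1 y : R) :
  0 < d -> 0 <= x -> S0 != 0 -> Y0 = g * F * x -> Y1 = d * F * x -> Fb = F + Y1 ->
  Sb = S0 + x + Y0 + Y1 + y -> l * F * x = S0 * x' ->
  [/\ 1 + d * x != 0, g * Fb * x / (1 + d * x) = Y0,
      dG d g Fb Sb x y != 0 & l * Fb * x / dG d g Fb Sb x y = x'].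
Proof.
move=> hd hx hS0 eY0 eY1 eFb eSb hl.
have hdx : 1 + d * x != 0 by rewrite gt_eqF // pos1 // mulr_ge0 // ltW.
have edG : dG d g Fb Sb x y = (1 + d * x) * S0.
  by rewrite /dG eSb eFb eY0 eY1; rnormR; ring.
split => //.
- rewrite eFb eY1 eY0; rnormR; field; exact/eqP.
- by rewrite edG mulf_neq0.
- rewrite edG.
  have -> : l * Fb * x / ((1 + d * x) * S0) = l * F * x / S0.
    rewrite eFb eY1; rnormR; field; split; exact/eqP.
  rewrite hl; rnormR; field; exact/eqP.
Qed.


Lemma layer_lt (d g l Fb Sb S0 x x' F Y0 Y1 y x0 y0 : R) :
  0 < d -> 0 < g -> 0 < l -> 0 < F -> 0 < x0 -> x0 < x -> 0 <= y0 -> y0 <= y -> 0 < S0 ->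
  Y0 = g * F * x -> Y1 = d * F * x -> Fb = F + Y1 ->
  Sb = S0 + x + Y0 + Y1 + y -> l * F * x = S0 * x' ->
  [/\ 1 + d * x0 != 0, dG d g Fb Sb x0 y0 != 0,
      0 < l * Fb * x0 / dG d g Fb Sb x0 y0, l * Fb * x0 / dG d g Fb Sb x0 y0 < x' &
      0 <= g * Fb * x0 / (1 + d * x0) /\ g * Fb * x0 / (1 + d * x0) <= Y0].
Proof.
move=> hd hg hl hF hx0 hx0x hy0 hy0y hS0 eY0 eY1 eFb eSb ehl.
have hx : 0 < x by apply: lt_trans hx0x.
have p0 : 0 < 1 + d * x0 by rewrite pos1 // mulr_ge0 // ltW.
have p1 : 0 < 1 + d * x by rewrite pos1 // mulr_ge0 // ltW.
have n0 : 1 + d * x0 != 0 by rewrite gt_eqF.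
have n1 : 1 + d * x != 0 by rewrite gt_eqF.
have nS0 : S0 != 0 by rewrite gt_eqF.
have hFb : Fb = F * (1 + d * x) by rewrite eFb eY1; rnormR; ring.
have hFbp : 0 < Fb by rewrite hFb mulr_gt0.
have hc : 0 < Fb * (d + g) by rewrite mulr_gt0 // addr_gt0.
have hh : x0 / (1 + d * x0) < x / (1 + d * x) by apply: hmono; rewrite ?ltW.
have hh0 : 0 < x0 / (1 + d * x0) by rewrite divr_gt0.
have eS0 : S0 = Sb - y - x - Fb * (d + g) * (x / (1 + d * x)).
  rewrite eSb eY0 eY1 hFb; rnormR; field; exact/eqP.
have edG0 : dG d g Fb Sb x0 y0 = (1 + d * x0) * (Sb - y0 - x0 - Fb * (d + g) * (x0 / (1 + d * x0))).
  rewrite /dG; rnormR; field; exact/eqP.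
set h0 := x0 / (1 + d * x0) in hh hh0 edG0 *.
set h := x / (1 + d * x) in hh eS0.
set D := Sb - y0 - x0 - Fb * (d + g) * h0 in edG0.
have hD : S0 < D.
  rewrite eS0 /D; apply: ler_ltB; last by rewrite ltr_pM2l.
  by apply: lerB; [apply: lerB | apply: ltW].
have hDp : 0 < D by apply: lt_trans hD.
have nD : D != 0 by rewrite gt_eqF.
have enew : l * Fb * x0 / dG d g Fb Sb x0 y0 = l * Fb * h0 / D.
  rewrite edG0 /h0; clearbody D; rnormR; field; split; exact/eqP.
have ex' : x' = l * Fb * h / S0.
  have -> : x' = l * F * x / S0 by rewrite ehl; rnormR; field; exact/eqP.
  rewrite /h hFb; rnormR; field; split; exact/eqP.
have hlFb : 0 < l * Fb by rewrite mulr_gt0.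
have eg : g * Fb * x0 / (1 + d * x0) = g * Fb * h0 by rewrite /h0 mulrA.
have eY0' : Y0 = g * Fb * h by rewrite eY0 /h hFb; rnormR; field; exact/eqP.
have hgFb : 0 < g * Fb by rewrite mulr_gt0.
split => //.
- by rewrite edG0 mulf_neq0.
- by rewrite enew divr_gt0 // mulr_gt0.
- rewrite enew ex'.
  apply: (@lt_trans _ _ (l * Fb * h / D)).
    by rewrite ltr_pM2r ?invr_gt0 // ltr_pM2l.
  have hB : 0 < l * Fb * h by rewrite mulr_gt0 // (lt_trans hh0 hh).
  by rewrite ltr_pM2l // ltf_pV2 ?posrE.
- rewrite eg eY0'; split; first by rewrite ltW // mulr_gt0.
  by rewrite ler_pM2l // ltW.
Qed.


Variables (a0 b0 c0 a1 b1 c1 Fbar Sbar : nat -> R) (n : nat).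
Local Notation del := (delta a1 b1 c1).
Local Notation gam := (gamma c0 a1 b1 c1).
Local Notation lam := (lambda a0 b0 c0 a1 b1 c1).

Definition dR i (x y : R) : R := (Sbar i - y) - x - Fbar i * (del i + gam i) * x
  + del i * (Sbar i - y) * x - del i * x ^+ 2.
Definition gR i (x : R) : R := gam i * Fbar i * x / (1 + del i * x).

Ltac evt := repeat first [apply: ev_add | apply: ev_opp | apply: ev_mul | apply: ev_exp2
  | apply: ev_cst | apply: ev_1 | eassumption].

Lemma ev_dfun i x y s vx vy : ev x s vx -> ev y s vy ->
  ev (dfun c0 a1 b1 c1 Fbar Sbar i x y) s (dR i vx vy).
Proof. move=> ex ey; rewrite /dfun /dR; evt. Qed.

Lemma ev_gY i x s vx : 1 + del i * vx != 0 -> ev x s vx ->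
  ev (gY c0 a1 b1 c1 Fbar i x) s (gR i vx).
Proof. move=> h ex; rewrite /gY /gR; apply: ev_div => //; evt. Qed.

Fixpoint rpair (s : R) (j : nat) : R * R :=
  match j with
  | O => (s, 0)
  | j'.+1 => ((lam (n - j') * Fbar (n - j') * (rpair s j').1 /
                dR (n - j') (rpair s j').1 (rpair s j').2),
              gR (n - j') (rpair s j').1)
  end.

Definition good s j := forall j', (j' < j)%N ->
  dR (n - j') (rpair s j').1 (rpair s j').2 != 0 /\ 1 + del (n - j') * (rpair s j').1 != 0.

Lemma ev_fpair s j : good s j ->
  ev (fpair a0 b0 c0 a1 b1 c1 n Fbar Sbar j).1 s (rpair s j).1 /\
  ev (fpair a0 b0 c0 a1 b1 c1 n Fbar Sbar j).2 s (rpair s j).2.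
Proof.
elim: j => [|j IH] hg /=; first by split; [apply: ev_X | apply: ev_0].
have [e1 e2] : ev (fpair a0 b0 c0 a1 b1 c1 n Fbar Sbar j).1 s (rpair s j).1 /\
  ev (fpair a0 b0 c0 a1 b1 c1 n Fbar Sbar j).2 s (rpair s j).2.
  by apply: IH => j' hj'; apply: hg; apply: ltnW.
have [hd h1] := hg j (ltnSn j).
split.
- by apply: ev_div => //; [apply: ev_mul => //; apply: ev_cst | apply: ev_dfun].
- exact: ev_gY.
Qed.

Definition rR s := (rpair s n).1 + (rpair s n).2.

Lemma key_eval s (r1 r2 : {poly R}) : good s n -> r2 != 0 -> coprimep r1 r2 ->
  rfun a0 b0 c0 a1 b1 c1 n Fbar Sbar = r1%:F / r2%:F ->
  r2.[s] != 0 /\ r1.[s] = rR s * r2.[s].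
Proof.
move=> hg hr2 hcop hr.
have [e1 e2] := ev_fpair hg.
have := ev_add e1 e2; rewrite -/(rfun _ _ _ _ _ _ _ _ _) hr.
move=> [u [w [hw e f]]].
have hr2F : r2%:F != 0 by rewrite tofrac_eq0.
have epoly : r1 * w = u * r2.
  apply/eqP; rewrite -tofrac_eq !tofracM -e.
  by rewrite mulrAC divfK.
have ev1 : r1.[s] * w.[s] = rR s * w.[s] * r2.[s].
  by rewrite -f -!hornerM epoly.
have er1 : r1.[s] = rR s * r2.[s].
  apply: (mulIf hw); by rewrite ev1 mulrAC.
split => //.
apply/negP => /eqP h0.
have : root r1 s by rewrite /root er1 h0 mulr0.
by move=> /(coprimep_root hcop); rewrite h0 eqxx.
Qed.

End Main.

Section G.
Variable R : rcfType.
Variables (a0 b0 c0 a1 b1 c1 : nat -> R) (Ebar : R) (Fbar Sbar S0 S1 F Y0 Y1 : nat -> R) (n : nat).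
Hypothesis hn : (1 <= n)%N.
Hypothesis hrate : forall i, (1 <= i <= n)%N ->
  [/\ 0 < a0 i, 0 < b0 i & 0 < c0 i] /\ [/\ 0 < a1 i, 0 < b1 i & 0 < c1 i].
Hypothesis hE : 0 < Ebar.
Hypothesis htot : forall i, (1 <= i <= n)%N -> 0 < Fbar i /\ 0 < Sbar i.
Hypothesis hB : BMSS a0 b0 c0 a1 b1 c1 n Ebar Fbar Sbar S0 S1 F Y0 Y1.

Local Notation del := (delta a1 b1 c1).
Local Notation gam := (gamma c0 a1 b1 c1).
Local Notation lam := (lambda a0 b0 c0 a1 b1 c1).
Local Notation Yn i := (if i == n then 0 else Y0 i.+1).

Lemma ssi i : (1 <= i <= n)%N ->
  [/\ Y0 i = gam i * F i * S1 i, Y1 i = del i * F i * S1 i,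
      lam i * F i * S1 i = S0 i * S1 i.-1, Fbar i = F i + Y1 i &
      Sbar i = S0 i + S1 i + Y0 i + Y1 i + Yn i].
Proof. by move=> hi; case: hB => [[h _] _]; apply: h. Qed.

Lemma nonneg i : (1 <= i <= n)%N ->
  [/\ 0 <= S0 i, 0 <= S1 i, 0 <= F i, 0 <= Y0 i & 0 <= Y1 i].
Proof. by move=> hi; case: hB => [_ [_ h]]; apply: h. Qed.

Lemma params i : (1 <= i <= n)%N -> [/\ 0 < del i, 0 < gam i & 0 < lam i].
Proof.
move=> hi; have [[ha0 hb0 hc0] [ha1 hb1 hc1]] := hrate hi.
have hd : 0 < del i by rewrite /delta divr_gt0 // addr_gt0.
have hg : 0 < gam i by rewrite /gamma mulr_gt0 // divr_gt0.
split => //; by rewrite /lambda mulr_gt0 // divr_gt0 // addr_gt0.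
Qed.

Lemma Fpos i : (1 <= i <= n)%N -> 0 < F i.
Proof.
move=> hi; have [_ _ hF _ _] := nonneg hi.
rewrite lt_def hF andbT; apply/eqP => F0.
have [_ eY1 _ eFb _] := ssi hi.
have [hFb _] := htot hi.
by move: hFb; rewrite eFb eY1 F0 !mulr0 mul0r addr0 ltxx.
Qed.

Lemma up m : (m < n)%N -> S1 m = 0 -> S1 m.+1 = 0.
Proof.
move=> hm h0.
have hi : (1 <= m.+1 <= n)%N by rewrite ltnS leq0n.
have [_ _ e3 _ _] := ssi hi.
have [_ _ hl] := params hi.
have hF := Fpos hi.
move: e3; rewrite [m.+1.-1]/= h0 mulr0 => /eqP.
have hLF : lam m.+1 * F m.+1 != 0 by rewrite mulf_neq0 // gt_eqF.
by rewrite mulf_eq0 (negbTE hLF) /= => /eqP.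
Qed.

Lemma to_n t k : (k + t = n)%N -> S1 k = 0 -> S1 n = 0.
Proof.
elim: t k => [|t IH] k; first by rewrite addn0 => <-.
move=> hk h0; apply: (IH k.+1); first by rewrite addSnnS.
by apply: up => //; rewrite -hk -addSnnS leq_addr.
Qed.

Lemma down t : (t <= n)%N -> S1 n = 0 ->
  S1 (n - t) = 0 /\ ((n - t < n)%N -> S1 (n - t).+1 = 0).
Proof.
move=> + hS; elim: t => [|t IH] ht; first by rewrite subn0 ltnn.
have [IH1 IH2] := IH (ltnW ht).
set i := (n - t)%N in IH1 IH2.
have hi : (1 <= i <= n)%N by rewrite subn_gt0 ht leq_subr.
have ei : (n - t.+1)%N = i.-1 by rewrite subnS.
have ei' : (i.-1.+1 = i)%N by rewrite prednK // subn_gt0.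
rewrite ei ei'; split; last by move=> _.
have [e0 e1 e3 _ e5] := ssi hi.
have [hd hg hl] := params hi.
have hyn : Yn i = 0.
  case: ifP => // /negbT hin.
  have hin' : (i < n)%N by rewrite ltn_neqAle hin leq_subr.
  have hi1 : (1 <= i.+1 <= n)%N by rewrite hin'.
  have [e0' _ _ _ _] := ssi hi1.
  by rewrite e0' (IH2 hin') mulr0.
have hS0 : S0 i = Sbar i.
  by rewrite e5 hyn e0 e1 IH1 !mulr0 !addr0.
have [_ hSb] := htot hi.
move: e3; rewrite IH1 mulr0 hS0 => /esym /eqP.
by rewrite mulf_eq0 gt_eqF //= => /eqP.
Qed.

Lemma S1n_ne0 : S1 n != 0.
Proof.
apply/eqP => hS.
have [h0 h1] := down (leqnn n) hS.
rewrite subnn in h0 h1.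
have hi1 : (1 <= 1 <= n)%N by rewrite hn.
have [e0 _ _ _ _] := ssi hi1.
case: hB => [[_ eE] _].
move: hE; by rewrite eE h0 e0 h1 // mulr0 addr0 ltxx.
Qed.

Lemma S1pos i : (i <= n)%N -> 0 < S1 i.
Proof.
move=> hi.
have hge : 0 <= S1 i.
  case: i hi => [|i] hi; first by case: hB => [_ [h _]].
  by have [] := nonneg (i := i.+1) hi.
rewrite lt_def hge andbT; apply/eqP => h0.
have := S1n_ne0; rewrite (@to_n (n - i) i) ?eqxx //.
by rewrite subnKC.
Qed.

Lemma S0pos i : (1 <= i <= n)%N -> 0 < S0 i.
Proof.
move=> hi; have [h _ _ _ _] := nonneg hi.
rewrite lt_def h andbT; apply/eqP => h0.
have [_ _ e3 _ _] := ssi hi.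
have [_ _ hl] := params hi.
have hi' : (i <= n)%N by case/andP: hi.
have hne : lam i * F i * S1 i != 0.
  have h1 := Fpos hi; have h2 := S1pos hi'.
  by apply: mulf_neq0; [apply: mulf_neq0|]; rewrite gt_eqF.
by move: hne; rewrite e3 h0 mul0r eqxx.
Qed.


Local Notation rp := (rpair a0 b0 c0 a1 b1 c1 Fbar Sbar n).
Local Notation gd := (good a0 b0 c0 a1 b1 c1 Fbar Sbar n).

Lemma edR i x y : dR c0 a1 b1 c1 Fbar Sbar i x y = dG (del i) (gam i) (Fbar i) (Sbar i) x y.
Proof. by []. Qed.
Lemma egR i x : gR c0 a1 b1 c1 Fbar i x = gam i * Fbar i * x / (1 + del i * x).
Proof. by []. Qed.
Lemma rpS s j : rp s j.+1 =
  (lam (n - j) * Fbar (n - j) * (rp s j).1 / dR c0 a1 b1 c1 Fbar Sbar (n - j) (rp s j).1 (rp s j).2,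
   gR c0 a1 b1 c1 Fbar (n - j) (rp s j).1).
Proof. by []. Qed.

Lemma idx j : (j < n)%N ->
  let i := (n - j)%N in [/\ (1 <= i <= n)%N, (n - j.+1 = i.-1)%N, (i.-1 <= n)%N &
                          Yn (n - j.+1)%N = Y0 i].
Proof.
move=> hj i.
have hi : (1 <= i <= n)%N by rewrite subn_gt0 hj leq_subr.
have ei : (n - j.+1)%N = i.-1 by rewrite subnS.
have hlt : (i.-1 < n)%N.
  by rewrite -ei; rewrite ltn_subrL hn.
split; [exact: hi | exact: ei | exact: ltnW hlt |].
rewrite ei (ltn_eqF hlt) prednK //; by case/andP: hi.
Qed.

Lemma eq_ind j : (j <= n)%N -> rp (S1 n) j = (S1 (n - j), Yn (n - j)%N) /\ gd (S1 n) j.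
Proof.
elim: j => [|j IH] hj.
  by split; [rewrite subn0 eqxx | move=> j'; rewrite ltn0].
have [e1 e2] := IH (ltnW hj).
have [hi ei hi' eYn] := idx hj.
set i := (n - j)%N in e1 hi ei hi' eYn.
have [e0 eY1 e3 eFb e5] := ssi hi.
have [hd hg hl] := params hi.
have hx : 0 <= S1 i by apply: ltW; apply: S1pos; case/andP: hi.
have hS0 : S0 i != 0 by rewrite gt_eqF // S0pos.
have [hdx hgR hdG hx'] := layer_eq hd hx hS0 e0 eY1 eFb e5 e3.
split.
  by rewrite rpS e1 /= edR egR hgR hx' eYn ei.
move=> j'; rewrite ltnS leq_eqVlt => /orP [/eqP -> | hj']; last exact: e2.
by rewrite e1 /= edR.
Qed.

Lemma lt_ind s j : 0 < s -> s < S1 n -> (j <= n)%N ->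
  [/\ 0 < (rp s j).1, (rp s j).1 < S1 (n - j), 0 <= (rp s j).2,
      (rp s j).2 <= Yn (n - j)%N & gd s j].
Proof.
move=> hs hsn; elim: j => [|j IH] hj.
  by split; rewrite /= ?subn0 ?eqxx // => j'; rewrite ltn0.
have [h1 h2 h3 h4 h5] := IH (ltnW hj).
have [hi ei hi' eYn] := idx hj.
set i := (n - j)%N in h2 h4 hi ei hi' eYn.
have [e0 eY1 e3 eFb e5] := ssi hi.
have [hd hg hl] := params hi.
have hF := Fpos hi.
have hS0 := S0pos hi.
have [hdx hdG hp hlt [hq hq']] := layer_lt hd hg hl hF h1 h2 h3 h4 hS0 e0 eY1 eFb e5 e3.
split.
- by rewrite rpS /= edR.
- by rewrite rpS /= edR ei.
- by rewrite rpS /= egR.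
- by rewrite rpS /= egR eYn.
move=> j'; rewrite ltnS leq_eqVlt => /orP [/eqP -> | hj']; last exact: h5.
by rewrite edR.
Qed.


Lemma Yn0 : Yn 0%N = Y0 1.
Proof. by rewrite eq_sym (gtn_eqF hn). Qed.

Lemma EbarE : Ebar = S1 0 + Y0 1.
Proof. by case: hB => [[_ e] _]. Qed.

Lemma final (r1 r2 : {poly R}) : r2 != 0 -> coprimep r1 r2 ->
  rfun a0 b0 c0 a1 b1 c1 n Fbar Sbar = r1%:F / r2%:F ->
  let P := r2 * Ebar%:P - r1 in
  [/\ 0 < S1 n, root P (S1 n) &
      forall s : R, 0 < s -> root P s -> S1 n <= s].
Proof.
move=> hr2 hcop hr P.
have hS := S1pos (leqnn n).
have hP : forall s, gd s n -> r2.[s] != 0 /\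
    P.[s] = r2.[s] * (Ebar - rR a0 b0 c0 a1 b1 c1 Fbar Sbar n s).
  move=> s hg; have [h2 h1] := key_eval hg hr2 hcop hr.
  split => //.
  by rewrite /P hornerD hornerN hornerM hornerC h1 mulrBr [_ * r2.[s]]mulrC.
have [e1 g1] := eq_ind (leqnn n).
have eR : rR a0 b0 c0 a1 b1 c1 Fbar Sbar n (S1 n) = Ebar.
  by rewrite /rR e1 /= subnn Yn0 EbarE.
split => //.
  by rewrite /root (hP _ g1).2 eR subrr mulr0.
move=> s hs hroot; rewrite leNgt; apply/negP => hlt.
have [h1 h2 h3 h4 h5] := lt_ind hs hlt (leqnn n).
have [hr2s hPs] := hP s h5.
have hlt2 : rR a0 b0 c0 a1 b1 c1 Fbar Sbar n s < Ebar.
  rewrite /rR EbarE; apply: ltr_leD; move: h2 h4; by rewrite subnn ?Yn0.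
move: hroot; rewrite /root hPs mulf_eq0 (negbTE hr2s) /= subr_eq0.
by rewrite gt_eqF.
Qed.

End G.

Theorem mainTheorem10 (R : rcfType) (n : nat) (a0 b0 c0 a1 b1 c1 : nat -> R)
  (Ebar : R) (Fbar Sbar : nat -> R)
  (S0 S1 F Y0 Y1 : nat -> R) (r1 r2 : {poly R}) :
  (1 <= n)%N ->
  (forall i, (1 <= i <= n)%N ->
     [/\ 0 < a0 i, 0 < b0 i & 0 < c0 i] /\ [/\ 0 < a1 i, 0 < b1 i & 0 < c1 i]) ->
  0 < Ebar ->
  (forall i, (1 <= i <= n)%N -> 0 < Fbar i /\ 0 < Sbar i) ->
  BMSS a0 b0 c0 a1 b1 c1 n Ebar Fbar Sbar S0 S1 F Y0 Y1 ->
  r2 != 0 -> coprimep r1 r2 ->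
  rfun a0 b0 c0 a1 b1 c1 n Fbar Sbar = r1%:F / r2%:F ->
  let P := r2 * Ebar%:P - r1 in
  [/\ 0 < S1 n, root P (S1 n) &
      forall s : R, 0 < s -> root P s -> S1 n <= s].
Proof.
move=> hn hrate hE htot hB hr2 hcop hr.
exact: (final hn hrate hE htot hB hr2 hcop hr).
Qed.
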